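(* Let $k\ge1$, let $U\subseteq\mathbb{R}^n$ be a domain, and let $f:U\times\mathbb{R}^n\to Cl_n$ be such that for each $x\in U$ the function $u\mapsto f(x,u)$ is a $Cl_n$-valued harmonic polynomial homogeneous of degree $k$. For $y\in\mathbb{R}^n\setminus\{0\}$ with $y^{-1}\in U$ and $w\in\mathbb{R}^n$, put $x=y^{-1}$ and $u=\frac{ywy}{\|y\|^2}$. Then $$P_{k,w}\Big[\frac{y}{\|y\|^n}f\Big(y^{-1},\frac{ywy}{\|y\|^2}\Big)\Big]=\frac{y}{\|y\|^n}\big(P_{k,u}f\big)(x,u)\Big|_{x=y^{-1},\ u=ywy/\|y\|^2}.$$
   Context: $Cl_n$ is the real Clifford algebra generated by an orthonormal basis $e_1,\dots,e_n$ of $\mathbb{R}^n\subseteq Cl_n$ with $e_ie_j+e_je_i=-2\delta_{ij}$; for a nonzero vector $y$, $y^{-1}=-y/\|y\|^2$. The Dirac operator in the variable $u$ is $D_u=\sum_{j=1}^n e_j\partial_{u_j}$. $\mathcal M_k$ denotes the space of $Cl_n$-valued polynomials $p(u)$ on $\mathbb{R}^n$, homogeneous of degree $k$, with $D_up=0$ (left monogenic). Every $Cl_n$-valued harmonic polynomial $h$ homogeneous of degree $k$ in $u$ decomposes uniquely as $h(u)=p_k(u)+u\,p_{k-1}(u)$ with $p_k\in\mathcal M_k$, $p_{k-1}\in\mathcal M_{k-1}$ (Almansi–Fischer decomposition); the projection $P_k$ is defined by $P_kh=p_k$, and explicitly $P_k=1+\frac{uD_u}{n+2k-2}$. A subscript,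 as in $P_{k,u}$, indicates the variable in which the projection acts. *)

(* Defs.v *)
From Stdlib Require Import Reals ClassicalEpsilon.
From mathcomp Require Import all_boot.
Set Implicit Arguments. Unset Strict Implicit. Unset Printing Implicit Defensive.

Local Open Scope R_scope.

Definition vec (n : nat) := 'I_n -> R.

Definition rsum (T : finType) (F : T -> R) : R := \big[Rplus/0]_(i : T) F i.

Definition dot n (x y : vec n) : R := rsum (fun i => x i * y i).
Definition norm n (x : vec n) : R := sqrt (dot x x).
Definition vzero n : vec n := fun _ => 0.
Definition vscale n (c : R) (x : vec n) : vec n := fun i => c * x i.
Definition vadd n (x y : vec n) : vec n := fun i => x i + y i.
Definition unitv n (j : 'I_n) : vec n := fun i => if i == j then 1 else 0.

(* The real Clifford algebra Cl_n: elements are families of real coefficients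
   indexed by subsets A of {1..n}, the coefficient of e_A = e_{a1}...e_{ap}
   (a1 < ... < ap). *)
Definition Cl (n : nat) := {set 'I_n} -> R.

Definition cl0 n : Cl n := fun _ => 0.
Definition cladd n (a b : Cl n) : Cl n := fun A => a A + b A.
Definition clscale n (c : R) (a : Cl n) : Cl n := fun A => c * a A.

(* sign of e_A e_B = sign * e_{A Δ B}, using e_i e_j = - e_j e_i (i<>j)
   and e_i^2 = -1 *)
Definition clsign n (A B : {set 'I_n}) : R :=
  (-1) ^ (#|[set p : 'I_n * 'I_n | (p.1 \in A) && (p.2 \in B) && (p.2 < p.1)%N]|
          + #|A :&: B|).

Definition clmul n (a b : Cl n) : Cl n := fun C =>
  rsum (fun A : {set 'I_n} =>
          let B := (A :\: C) :|: (C :\: A) in clsign A B * a A * b B).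

Definition tocl n (x : vec n) : Cl n := fun A => rsum (fun i => if A == [set i] then x i else 0).
Definition grade1 n (a : Cl n) : vec n := fun i => a [set i].

Definition vinv n (y : vec n) : vec n := vscale (- / (norm y ^ 2)) y.

(* Partial derivative d/du_j of a real function on R^n at u (the derivative,
   when it exists; chosen by classical description). *)
Definition rpartial n (h : vec n -> R) (j : 'I_n) (u : vec n) : R :=
  epsilon (inhabits 0)
    (fun l => derivable_pt_lim (fun t => h (vadd u (vscale t (unitv j)))) 0 l).

Definition rdifferentiable_partial n (h : vec n -> R) (j : 'I_n) (u : vec n) : Prop :=
  exists l, derivable_pt_lim (fun t => h (vadd u (vscale t (unitv j)))) 0 l.

Definition clpartial n (g : vec n -> Cl n) (j : 'I_n) : vec n -> Cl n :=
  fun u A => rpartial (fun v => g v A) j u.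

Definition dirac n (g : vec n -> Cl n) : vec n -> Cl n := fun u A =>
  rsum (fun j : 'I_n => clmul (tocl (unitv j)) (clpartial g j u) A).

Definition laplacian n (g : vec n -> Cl n) : vec n -> Cl n := fun u A =>
  rsum (fun j : 'I_n => clpartial (clpartial g j) j u A).

Definition monomial n (alpha : 'I_n -> nat) (u : vec n) : R :=
  \big[Rmult/1]_(i : 'I_n) (u i ^ alpha i).

Definition homogeneous_poly n (k : nat) (g : vec n -> Cl n) : Prop :=
  exists s : seq (('I_n -> nat) * Cl n),
    (forall m, List.In m s -> (\sum_(i : 'I_n) m.1 i)%N = k) /\
    forall u A, g u A = \big[Rplus/0]_(m <- s) (m.2 A * monomial m.1 u).

Definition harmonic_hom_poly n (k : nat) (g : vec n -> Cl n) : Prop :=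
  homogeneous_poly k g /\ forall u, laplacian g u = @cl0 n.

Definition Pk n (k : nat) (g : vec n -> Cl n) : vec n -> Cl n := fun u =>
  cladd (g u) (clscale (/ INR (n + 2 * k - 2)) (clmul (tocl u) (dirac g u))).

Definition open_set n (U : vec n -> Prop) : Prop :=
  forall x, U x -> exists eps, 0 < eps /\
    forall z, norm (vadd z (vscale (-1) x)) < eps -> U z.

Definition connected_set n (U : vec n -> Prop) : Prop :=
  forall V W : vec n -> Prop, open_set V -> open_set W ->
    (forall x, U x -> V x \/ W x) ->
    (forall x, U x -> V x -> W x -> False) ->
    (forall x, U x -> ~ V x) \/ (forall x, U x -> ~ W x).

Definition domain n (U : vec n -> Prop) : Prop :=
  (exists x, U x) /\ open_set U /\ connected_set U.

(* Main.v *)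
Require Import Defs.
From Stdlib Require Import Reals Lra FunctionalExtensionality ClassicalEpsilon.
From HB Require Import structures.
From mathcomp Require Import all_boot.
Local Open Scope R_scope.

Lemma Rplus_assoc' : associative Rplus. Proof. move=> *; ring. Qed.
Lemma Rplus_comm' : commutative Rplus. Proof. move=> *; ring. Qed.
Lemma Rplus_0_l' : left_id 0 Rplus. Proof. move=> *; ring. Qed.
Lemma Rmult_assoc' : associative Rmult. Proof. move=> *; ring. Qed.
Lemma Rmult_comm' : commutative Rmult. Proof. move=> *; ring. Qed.
Lemma Rmult_1_l' : left_id 1 Rmult. Proof. move=> *; ring. Qed.
HB.instance Definition _ := Monoid.isComLaw.Build R 0 Rplus Rplus_assoc' Rplus_comm' Rplus_0_l'.
HB.instance Definition _ := Monoid.isComLaw.Build R 1 Rmult Rmult_assoc' Rmult_comm' Rmult_1_l'.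
Lemma Rm0l : left_zero 0 Rmult. Proof. move=> *; ring. Qed.
Lemma Rm0r : right_zero 0 Rmult. Proof. move=> *; ring. Qed.
HB.instance Definition _ := Monoid.isMulLaw.Build R 0 Rmult Rm0l Rm0r.
Lemma RDl : left_distributive Rmult Rplus. Proof. move=> *; ring. Qed.
Lemma RDr : right_distributive Rmult Rplus. Proof. move=> *; ring. Qed.
HB.instance Definition _ := Monoid.isAddLaw.Build R Rmult Rplus RDl RDr.


Section Cliff.
Variable n : nat.
Implicit Types (C A B : {set 'I_n}) (i j : 'I_n).

Definition tog i C : {set 'I_n} := if i \in C then C :\ i else i |: C.

Lemma in_tog i j C : (j \in tog i C) = (j == i) (+) (j \in C).
Proof.
rewrite /tog; case: (boolP (i \in C)) => Hi.
  rewrite !inE; case: eqP => [->|]; by rewrite ?Hi.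
rewrite !inE; case: eqP => [->|]; by rewrite ?(negbTE Hi).
Qed.

Lemma togK i C : tog i (tog i C) = C.
Proof. apply/setP => x; rewrite !in_tog; by case: (x == i); case: (x \in C). Qed.

Lemma togC i j C : tog i (tog j C) = tog j (tog i C).
Proof. apply/setP => x; rewrite !in_tog; by case: (x == i); case: (x == j); case: (x \in C). Qed.

Lemma symd1 i C : ([set i] :\: C) :|: (C :\: [set i]) = tog i C.
Proof. apply/setP => x; rewrite in_tog !inE; by case: (x == i); case: (x \in C). Qed.

Lemma sd_eq A C j : ((A :\: C) :|: (C :\: A) == [set j]) = (A == tog j C).
Proof.
apply/eqP/eqP => [H|->].
  apply/setP => x; move/setP: H => /(_ x); rewrite in_tog !inE.
  by case: (x == j); case: (x \in C); case: (x \in A).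
apply/setP => x; rewrite !inE !in_tog; by case: (x == j); case: (x \in C).
Qed.

Definition cnt (P : pred 'I_n) B := #|[set b in B | P b]|.

Lemma cntD1 (P : pred 'I_n) B j : j \in B -> cnt P B = (P j + cnt P (B :\ j))%N.
Proof.
move=> Hj; rewrite /cnt (cardsD1 j [set b in B | P b]) !inE Hj /=.
congr (_ + _)%N; apply: eq_card => x; rewrite !inE; by case: (x == j).
Qed.

Lemma cnt_tog (P : pred 'I_n) B j : odd (cnt P (tog j B)) = P j (+) odd (cnt P B).
Proof.
rewrite /tog; case: (boolP (j \in B)) => Hj.
  rewrite (cntD1 P B j Hj) oddD; by case: (P j); case: (odd _).
have H1 : j \in j |: B by rewrite !inE eqxx.
rewrite (cntD1 P (j |: B) j H1) oddD.
have -> : (j |: B) :\ j = B.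
  apply/setP => x; rewrite !inE; case: eqP => [->|] //=; by rewrite (negbTE Hj).
by case: (P j).
Qed.

Definition pm (b : bool) : R := if b then -1 else 1.

Lemma pow_m1 m : (-1) ^ m = pm (odd m).
Proof. elim: m => [|m IH] /=; first by []. rewrite IH; case: (odd m) => /=; ring. Qed.

Lemma pmD a b : pm a * pm b = pm (a (+) b).
Proof. case: a; case: b => /=; ring. Qed.

Lemma clsignL i B : clsign [set i] B = pm (odd (cnt (fun b => (b < i)%N) B) (+) (i \in B)).
Proof.
rewrite /clsign pow_m1 oddD; congr (pm (_ (+) _)).
  congr odd.
  have -> : [set p : 'I_n * 'I_n | (p.1 \in [set i]) && (p.2 \in B) && (p.2 < p.1)%N]
          = [set (i, b) | b in [set b in B | (b < i)%N]].
    apply/setP => [[a b]]; rewrite !inE /=.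
    apply/idP/imsetP => [/andP[/andP[/eqP -> Hb] Hl]|[c]].
      by exists b; rewrite // !inE Hb.
    by rewrite !inE => /andP[Hc Hl] [-> ->]; rewrite eqxx Hc.
  by rewrite card_imset // => x1 x2 [].
have -> : [set i] :&: B = if i \in B then [set i] else set0.
  case: (boolP (i \in B)) => H; apply/setP => x; rewrite !inE;
   case: eqP => [->|] //=; by rewrite ?andbT ?andbF ?(negbTE H).
by case: (i \in B); rewrite ?cards1 ?cards0.
Qed.

Lemma clsignR A j : clsign A [set j] = pm (odd (cnt (fun a => (j < a)%N) A) (+) (j \in A)).
Proof.
rewrite /clsign pow_m1 oddD; congr (pm (_ (+) _)).
  congr odd.
  have -> : [set p : 'I_n * 'I_n | (p.1 \in A) && (p.2 \in [set j]) && (p.2 < p.1)%N]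
          = [set (a, j) | a in [set a in A | (j < a)%N]].
    apply/setP => [[a b]]; rewrite !inE /=.
    apply/idP/imsetP => [/andP[/andP[Ha /eqP ->] Hl]|[c]].
      by exists a; rewrite // !inE Ha.
    by rewrite !inE => /andP[Hc Hl] [-> ->]; rewrite eqxx Hc.
  by rewrite card_imset // => x1 x2 [].
have -> : A :&: [set j] = if j \in A then [set j] else set0.
  case: (boolP (j \in A)) => H; apply/setP => x; rewrite !inE;
   case: eqP => [->|] //=; by rewrite ?andbT ?andbF ?(negbTE H).
by case: (j \in A); rewrite ?cards1 ?cards0.
Qed.

Definition sL i C := clsign [set i] (tog i C).
Definition sR j C := clsign (tog j C) [set j].

Lemma sLE i C : sL i C = pm (odd (cnt (fun b => (b < i)%N) C) (+) ~~ (i \in C)).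
Proof. by rewrite /sL clsignL cnt_tog in_tog eqxx ltnn. Qed.
Lemma sRE j C : sR j C = pm (odd (cnt (fun a => (j < a)%N) C) (+) ~~ (j \in C)).
Proof. by rewrite /sR clsignR cnt_tog in_tog eqxx ltnn. Qed.

Lemma pm_neg b : pm b + pm (~~ b) = 0.
Proof. case: b => /=; ring. Qed.

Lemma S1 i j C : sL i C * sL j (tog i C) + sL j C * sL i (tog j C) = if i == j then -2 else 0.
Proof.
rewrite !sLE !cnt_tog !in_tog !pmD.
case: eqP => [->|/eqP Hij].
  rewrite eqxx ltnn /=; case: (odd _); case: (_ \in _) => /=; ring.
have Hl : (j < i)%N = ~~ (i < j)%N.
  rewrite ltnNge leq_eqVlt negb_or; case: (i < j)%N; rewrite ?andbT ?andbF //.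
  by rewrite eq_sym; apply/negP => /eqP /val_inj /eqP; rewrite (negbTE Hij).
have Hij2 : (i == j) = false by rewrite eq_sym (negbTE Hij).
rewrite Hl Hij2 /=.
move: (odd (cnt _ C)) (odd (cnt (fun b => (b < j)%N) C)) (i \in C) (j \in C) (i < j)%N
  => a b c d e.
case: a; case: b; case: c; case: d; case: e => /=; ring.
Qed.

Lemma S2 i j C : sL i C * sR j (tog i C) = sR j C * sL i (tog j C).
Proof.
rewrite sLE !sRE sLE !cnt_tog !in_tog !pmD eq_sym.
move: (odd (cnt _ C)) (odd (cnt (fun a => (j < a)%N) C)) (i \in C) (j \in C) (i < j)%N (j < i)%N (i == j)
  => a b c d e f g.
by case: a; case: b; case: c; case: d; case: e; case: f; case: g.
Qed.


Lemma sum_delta (F : 'I_n -> R) i : rsum (fun j => if i == j then F j else 0) = F i.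
Proof.
rewrite /rsum (bigD1 i) //= eqxx big1 => [|j /negbTE]; first by rewrite Rplus_0_r.
by rewrite eq_sym => ->.
Qed.

Lemma sum_delta' (F : 'I_n -> R) i : rsum (fun j => if j == i then F j else 0) = F i.
Proof. rewrite -(sum_delta F i) /rsum; apply: eq_bigr => j _; by rewrite eq_sym. Qed.

Lemma L1 (a : vec n) (X : Cl n) C :
  clmul (tocl a) X C = rsum (fun i => a i * sL i C * X (tog i C)).
Proof.
rewrite /clmul /tocl /rsum.
under eq_bigr => A _ do rewrite big_distrr big_distrl /=.
rewrite exchange_big /=; apply: eq_bigr => i _.
rewrite (eq_bigr (fun A => if A == [set i] then
   clsign [set i] (([set i] :\: C) :|: (C :\: [set i])) * a i * X (([set i] :\: C) :|: (C :\: [set i])) else 0)).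
  by rewrite -big_mkcond big_pred1_eq symd1 /sL; ring.
move=> A _; case: eqP => [->|_]; [done | by rewrite Rmult_0_r Rmult_0_l].
Qed.

Lemma L2 (b : vec n) (X : Cl n) C :
  clmul X (tocl b) C = rsum (fun j => b j * sR j C * X (tog j C)).
Proof.
rewrite /clmul /tocl /rsum.
under eq_bigr => A _ do rewrite big_distrr /=.
rewrite exchange_big /=; apply: eq_bigr => j _.
rewrite (eq_bigr (fun A => if A == tog j C then
   clsign (tog j C) [set j] * X (tog j C) * b j else 0)).
  by rewrite -big_mkcond big_pred1_eq /sR; ring.
move=> A _; rewrite sd_eq; case: eqP => [->|_]; last by rewrite Rmult_0_r.
by have := sd_eq (tog j C) C j; rewrite eqxx => /eqP ->.
Qed.

Definition one : Cl n := fun C => if C == set0 then 1 else 0.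

Lemma tog0 i C : (tog i C == set0) = (C == [set i]).
Proof.
apply/eqP/eqP => [H|->].
  apply/setP => x; move/setP: H => /(_ x); rewrite in_tog !inE.
  by case: (x == i); case: (x \in C).
apply/setP => x; rewrite in_tog !inE; by case: (x == i).
Qed.

Lemma tocl1 (a : vec n) i : tocl a [set i] = a i.
Proof.
rewrite /tocl -(sum_delta a i) /rsum; apply: eq_bigr => k _.
have -> : ([set i] == [set k]) = (i == k) by apply/eqP/eqP => [/set1_inj|->].
done.
Qed.

Lemma L_one (a : vec n) C : clmul (tocl a) one C = tocl a C.
Proof.
rewrite L1 /tocl /one /rsum; apply: eq_bigr => i _.
rewrite tog0; case: eqP => [->|_]; last ring.
rewrite sLE.
have -> : cnt (fun b => (b < i)%N) [set i] = 0%N.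
  apply/eqP; rewrite cards_eq0; apply/eqP/setP => x; rewrite !inE.
  by case: eqP => [->|]; rewrite ?ltnn.
by rewrite inE eqxx /=; ring.
Qed.

Lemma helpK x y z p1 p2 p3 p4 v : p1*p2+p3*p4 = v ->
  x*p1*(y*p2*z) + y*p3*(x*p4*z) = x*y*z*v.
Proof. move=> <-; ring. Qed.

Lemma Kid (a b : vec n) (X : Cl n) C :
  clmul (tocl a) (clmul (tocl b) X) C + clmul (tocl b) (clmul (tocl a) X) C
  = -2 * dot a b * X C.
Proof.
rewrite !L1 /rsum.
under eq_bigr => i _ do rewrite L1 /rsum.
under [X in _ + X]eq_bigr => i _ do rewrite L1 /rsum.
rewrite /dot /rsum.
under eq_bigr => i _ do rewrite big_distrr /=.
under [X in _ + X]eq_bigr => i _ do rewrite big_distrr /=.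
rewrite [X in _ + X]exchange_big /= -big_split /= big_distrr big_distrl /=.
apply: eq_bigr => i _; rewrite -big_split /=.
rewrite (eq_bigr (fun j => if i == j then -2 * (a i * b i) * X C else 0)).
  exact: (sum_delta (fun _ : 'I_n => -2 * (a i * b i) * X C) i).
move=> j _; rewrite (togC j i); have := S1 i j C.
case: eqP => [<-|_] H; rewrite ?togK; rewrite (@helpK _ _ _ _ _ _ _ _ H); ring.
Qed.

Lemma helpLR x y z p1 p2 p3 p4 : p1*p2 = p3*p4 ->
  y*p3*(x*p4*z) = x*p1*(y*p2*z).
Proof. move=> H. transitivity (x*y*z*(p3*p4)); [ring | rewrite -H; ring]. Qed.

Lemma LR (a b : vec n) (X : Cl n) C :
  clmul (clmul (tocl a) X) (tocl b) C = clmul (tocl a) (clmul X (tocl b)) C.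
Proof.
rewrite L2 L1 /rsum.
under eq_bigr => j _ do rewrite L1 /rsum.
under [RHS]eq_bigr => i _ do rewrite L2 /rsum.
under eq_bigr => j _ do rewrite big_distrr /=.
under [RHS]eq_bigr => i _ do rewrite big_distrr /=.
rewrite exchange_big /=; apply: eq_bigr => i _; apply: eq_bigr => j _.
rewrite togC.
have H := S2 i j C.
rewrite (@helpLR _ _ _ _ _ _ _ H); ring.
Qed.


Lemma lm_lin2 (a : vec n) (X Y : Cl n) al be C :
  clmul (tocl a) (fun B => al * X B + be * Y B) C
  = al * clmul (tocl a) X C + be * clmul (tocl a) Y C.
Proof.
rewrite !L1 /rsum !big_distrr -big_split /=; apply: eq_bigr => i _; ring.
Qed.

Lemma lm_scal2 (a : vec n) (X : Cl n) al C :
  clmul (tocl a) (fun B => al * X B) C = al * clmul (tocl a) X C.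
Proof. rewrite !L1 /rsum !big_distrr /=; apply: eq_bigr => i _; ring. Qed.

Lemma lm_sum2 (a : vec n) (F : 'I_n -> Cl n) C :
  clmul (tocl a) (fun B => rsum (fun k => F k B)) C = rsum (fun k => clmul (tocl a) (F k) C).
Proof.
rewrite L1 /rsum; under [RHS]eq_bigr => k _ do rewrite L1 /rsum.
rewrite exchange_big /=; apply: eq_bigr => i _; rewrite big_distrr /=.
apply: eq_bigr => k _; ring.
Qed.

Lemma lm_lin1 (a b : vec n) al be (X : Cl n) C :
  clmul (tocl (fun i => al * a i + be * b i)) X C
  = al * clmul (tocl a) X C + be * clmul (tocl b) X C.
Proof.
rewrite !L1 /rsum !big_distrr -big_split /=; apply: eq_bigr => i _; ring.
Qed.

Lemma lm_sum1 (g : 'I_n -> R) (v : 'I_n -> vec n) (X : Cl n) C :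
  clmul (tocl (fun i => rsum (fun k => g k * v k i))) X C
  = rsum (fun k => g k * clmul (tocl (v k)) X C).
Proof.
rewrite L1 /rsum; under [RHS]eq_bigr => k _ do rewrite L1 /rsum big_distrr /=.
rewrite exchange_big /=; apply: eq_bigr => i _; rewrite big_distrl /= big_distrl /=.
apply: eq_bigr => k _; ring.
Qed.

Lemma lm_ext1 (a b : vec n) (X : Cl n) C : (forall i, a i = b i) ->
  clmul (tocl a) X C = clmul (tocl b) X C.
Proof. move=> H; rewrite !L1 /rsum; apply: eq_bigr => i _; by rewrite H. Qed.

Lemma lm_ext2 (a : vec n) (X Y : Cl n) C : (forall B, X B = Y B) ->
  clmul (tocl a) X C = clmul (tocl a) Y C.
Proof. move=> H; rewrite !L1 /rsum; apply: eq_bigr => i _; by rewrite H. Qed.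

Lemma dotC (a b : vec n) : dot a b = dot b a.
Proof. rewrite /dot /rsum; apply: eq_bigr => i _; ring. Qed.

Lemma dot_unit (a : vec n) j : dot a (unitv j) = a j.
Proof.
rewrite /dot /unitv -(sum_delta' a j) /rsum; apply: eq_bigr => i _.
case: eqP => _; ring.
Qed.

Lemma lm_yy (a : vec n) B : clmul (tocl a) (clmul (tocl a) one) B = - dot a a * one B.
Proof. have := Kid a a one B. lra. Qed.

Lemma phiE (q : R) (y w : vec n) i :
  grade1 (clscale q (clmul (clmul (tocl y) (tocl w)) (tocl y))) i
  = q * (dot y y * w i - 2 * dot y w * y i).
Proof.
rewrite /grade1 /clscale LR.
have E1 : tocl y = clmul (tocl y) one by apply: functional_extensionality => C; rewrite L_one.
rewrite {2}E1.
have := Kid y w (clmul (tocl y) one) [set i].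
rewrite (lm_ext2 w (clmul (tocl y) (clmul (tocl y) one)) (fun B => - dot y y * one B)); last exact: lm_yy.
rewrite lm_scal2 L_one -E1 !tocl1 => H.
congr (_ * _); lra.
Qed.


Lemma dpl_ext (f g : R -> R) x l l' : derivable_pt_lim f x l -> (forall t, f t = g t) -> l = l' ->
  derivable_pt_lim g x l'.
Proof.
move=> D H <-; move: D; have -> : g = f by apply: functional_extensionality => t; rewrite H.
done.
Qed.
Arguments dpl_ext {f g x l l'}.

Lemma dlin a b : derivable_pt_lim (fun t => a + t * b) 0 b.
Proof.
have H := derivable_pt_lim_plus (fct_cte a) (mult_real_fct b id) 0 0 (b * 1)
  (derivable_pt_lim_const a 0) (derivable_pt_lim_scal id b 0 1 (derivable_pt_lim_id 0)).
apply: (dpl_ext H) => [t|]; rewrite /plus_fct /fct_cte /mult_real_fct /id /=; ring.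
Qed.

Lemma dlin_pow a b m : derivable_pt_lim (fun t => (a + t * b) ^ m) 0 (INR m * a ^ m.-1 * b).
Proof.
have H := derivable_pt_lim_comp (fun t => a + t * b) (fun x => x ^ m) 0 b
   (INR m * (a + 0 * b) ^ m.-1) (dlin a b) (derivable_pt_lim_pow _ m).
apply: (dpl_ext H) => [t|]; rewrite /comp //.
rewrite Rmult_0_l Rplus_0_r; ring.
Qed.

Lemma dsum (I : Type) (r : seq I) (F : I -> R -> R) (L : I -> R) :
  (forall x, derivable_pt_lim (F x) 0 (L x)) ->
  derivable_pt_lim (fun t => \big[Rplus/0]_(x <- r) F x t) 0 (\big[Rplus/0]_(x <- r) L x).
Proof.
move=> HF; elim: r => [|x r IH].
  apply: (dpl_ext (derivable_pt_lim_const 0 0)) => [t|]; by rewrite big_nil.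
have H := derivable_pt_lim_plus _ _ 0 _ _ (HF x) IH.
apply: (dpl_ext H) => [t|]; by rewrite big_cons.
Qed.


Fixpoint dP (r : seq 'I_n) (al : 'I_n -> nat) (u v : vec n) : R :=
  match r with
  | [::] => 0
  | i :: r' => INR (al i) * u i ^ (al i).-1 * v i * \big[Rmult/1]_(k <- r') (u k ^ al k)
               + u i ^ al i * dP r' al u v
  end.

Lemma dP_lim r al (u v : vec n) :
  derivable_pt_lim (fun t => \big[Rmult/1]_(k <- r) (vadd u (vscale t v) k ^ al k)) 0 (dP r al u v).
Proof.
elim: r => [|i r IH] /=.
  apply: (dpl_ext (derivable_pt_lim_const 1 0)) => [t|] //. by rewrite unlock.
have H := derivable_pt_lim_mult _ _ 0 _ _ (dlin_pow (u i) (v i) (al i)) IH.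
apply: (dpl_ext H) => [t|]; first by rewrite big_cons.
rewrite /vadd /vscale Rmult_0_l Rplus_0_r.
congr (_ + _); congr (_ * _).
apply: eq_bigr => k _; by rewrite Rmult_0_l Rplus_0_r.
Qed.

Lemma sum_unit (v : vec n) i : rsum (fun k => v k * unitv k i) = v i.
Proof.
rewrite /unitv -(sum_delta' v i) /rsum; apply: eq_bigr => k _.
rewrite eq_sym; case: eqP => _; ring.
Qed.

Lemma dP_lin r al (u v : vec n) :
  dP r al u v = rsum (fun k => v k * dP r al u (unitv k)).
Proof.
elim: r => [|i r IH] /=.
  rewrite /rsum big1 // => k _; ring.
rewrite IH /rsum.
rewrite [RHS](eq_bigr (fun k => (v k * unitv k i) * (INR (al i) * u i ^ (al i).-1 *
    \big[Rmult/1]_(k0 <- r) u k0 ^ al k0) + u i ^ al i * (v k * dP r al u (unitv k)))).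
  rewrite big_split /= -big_distrl -big_distrr /=.
  have := sum_unit v i; rewrite /rsum => ->; ring.
move=> k _; ring.
Qed.

Definition Hs (s : seq (('I_n -> nat) * Cl n)) (u : vec n) : Cl n :=
  fun A => \big[Rplus/0]_(m <- s) (m.2 A * monomial m.1 u).

Definition DH (s : seq (('I_n -> nat) * Cl n)) (u v : vec n) : Cl n :=
  fun A => \big[Rplus/0]_(m <- s) (m.2 A * dP (index_enum 'I_n) m.1 u v).

Lemma DH_lim s u v A :
  derivable_pt_lim (fun t => Hs s (vadd u (vscale t v)) A) 0 (DH s u v A).
Proof.
rewrite /Hs /DH.
have := dsum _ s (fun m t => m.2 A * monomial m.1 (vadd u (vscale t v)))
  (fun m => m.2 A * dP (index_enum 'I_n) m.1 u v).
apply => m.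
have H := derivable_pt_lim_scal _ (m.2 A) 0 _ (dP_lim (index_enum 'I_n) m.1 u v).
exact: H.
Qed.

Lemma DH_lin s u v A : DH s u v A = rsum (fun k => v k * DH s u (unitv k) A).
Proof.
rewrite /DH /rsum.
under eq_bigr => m _ do rewrite dP_lin /rsum big_distrr /=.
rewrite exchange_big /=; apply: eq_bigr => k _; rewrite big_distrr /=.
apply: eq_bigr => m _; ring.
Qed.

Lemma rpartial_H s j u A : rpartial (fun x => Hs s x A) j u = DH s u (unitv j) A.
Proof.
rewrite /rpartial.
have Hex : exists l, derivable_pt_lim (fun t => Hs s (vadd u (vscale t (unitv j))) A) 0 l.
  by exists (DH s u (unitv j) A); apply: DH_lim.
have := epsilon_spec (inhabits 0) _ Hex => H.
exact: (uniqueness_limite _ _ _ _ H (DH_lim s u (unitv j) A)).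
Qed.



Lemma lm_add2 (a : vec n) (X Y : Cl n) C :
  clmul (tocl a) (fun B => X B + Y B) C = clmul (tocl a) X C + clmul (tocl a) Y C.
Proof. rewrite !L1 /rsum -big_split /=; apply: eq_bigr => i _; ring. Qed.

Lemma dot_lin (y w e : vec n) t : dot y (vadd w (vscale t e)) = dot y w + t * dot y e.
Proof.
rewrite /dot /rsum big_distrr -big_split /=; apply: eq_bigr => i _.
rewrite /vadd /vscale; ring.
Qed.

Lemma rpartial_G s0 (y : vec n) s (psi : vec n -> vec n) j w B :
  (forall t, psi (vadd w (vscale t (unitv j))) = vadd (psi w) (vscale t (psi (unitv j)))) ->
  rpartial (fun v => clscale s0 (clmul (tocl y) (Hs s (psi v))) B) j w
  = s0 * clmul (tocl y) (DH s (psi w) (psi (unitv j))) B.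
Proof.
move=> Hpsi.
have D : derivable_pt_lim (fun t => clscale s0 (clmul (tocl y) (Hs s (psi (vadd w (vscale t (unitv j)))))) B) 0
     (s0 * clmul (tocl y) (DH s (psi w) (psi (unitv j))) B).
  have H := dsum _ (index_enum 'I_n)
    (fun i t => y i * sL i B * Hs s (vadd (psi w) (vscale t (psi (unitv j)))) (tog i B))
    (fun i => y i * sL i B * DH s (psi w) (psi (unitv j)) (tog i B))
    (fun i => derivable_pt_lim_scal _ _ _ _ (DH_lim s (psi w) (psi (unitv j)) (tog i B))).
  have H2 := derivable_pt_lim_scal _ s0 0 _ H.
  apply: (dpl_ext H2) => [t|]; rewrite /mult_real_fct /clscale L1 ?Hpsi //.
rewrite /rpartial.
apply: (uniqueness_limite _ 0 _ _ _ D).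
apply: epsilon_spec; by exists (s0 * clmul (tocl y) (DH s (psi w) (psi (unitv j))) B).
Qed.

Lemma stepK (y : vec n) q D (Z : Cl n) k A : q * D = 1 -> D = dot y y ->
  rsum (fun j => q * (D * unitv j k - 2 * y j * y k) *
                 clmul (tocl (unitv j)) (clmul (tocl y) Z) A)
  = - clmul (tocl y) (clmul (tocl (unitv k)) Z) A.
Proof.
move=> HqD HD.
rewrite -(lm_sum1 (fun j => q * (D * unitv j k - 2 * y j * y k)) (@unitv n) (clmul (tocl y) Z) A).
rewrite (lm_ext1 _ (fun i => (q * D) * unitv k i + (-2 * q * y k) * y i)); last first.
  move=> i; rewrite (sum_unit (fun j => q * (D * unitv j k - 2 * y j * y k)) i).
  rewrite /unitv eq_sym; case: eqP => _; ring.
rewrite lm_lin1.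
have H1 := Kid (unitv k) y Z A.
have H2 := Kid y y Z A.
rewrite dotC dot_unit in H1.
rewrite -HD in H2.
have -> : clmul (tocl (unitv k)) (clmul (tocl y) Z) A =
   -2 * y k * Z A - clmul (tocl y) (clmul (tocl (unitv k)) Z) A by lra.
have -> : clmul (tocl y) (clmul (tocl y) Z) A = - D * Z A by lra.
transitivity (- (q * D) * clmul (tocl y) (clmul (tocl (unitv k)) Z) A); first ring.
rewrite HqD; ring.
Qed.

Lemma main k s (y w : vec n) (psi : vec n -> vec n) (s0 q D : R) :
  q * D = 1 -> D = dot y y -> (forall v i, psi v i = q * (D * v i - 2 * dot y v * y i)) ->
  Pk k (fun w' => clscale s0 (clmul (tocl y) (Hs s (psi w')))) w
  = clscale s0 (clmul (tocl y) (Pk k (Hs s) (psi w))).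
Proof.
move=> HqD HD Hpsi.
have Hlin : forall j t, psi (vadd w (vscale t (unitv j))) = vadd (psi w) (vscale t (psi (unitv j))).
  move=> j t; apply: functional_extensionality => i.
  rewrite /vadd /vscale !Hpsi dot_lin /vadd /vscale; ring.
have EZ : forall k, clpartial (Hs s) k (psi w) = DH s (psi w) (unitv k).
  move=> k0; apply: functional_extensionality => B; exact: rpartial_H.
have EdH : forall B, dirac (Hs s) (psi w) B
    = rsum (fun k0 => clmul (tocl (unitv k0)) (DH s (psi w) (unitv k0)) B).
  move=> B; rewrite /dirac /rsum; apply: eq_bigr => k0 _; by rewrite EZ.
have EG : dirac (fun w' => clscale s0 (clmul (tocl y) (Hs s (psi w')))) w
    = fun A => - s0 * clmul (tocl y) (dirac (Hs s) (psi w)) A.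
  apply: functional_extensionality => A; rewrite /dirac.
  transitivity (rsum (fun j => s0 * rsum (fun k0 => q * (D * unitv j k0 - 2 * y j * y k0) *
       clmul (tocl (unitv j)) (clmul (tocl y) (DH s (psi w) (unitv k0))) A))).
    rewrite /rsum; apply: eq_bigr => j _.
    rewrite (lm_ext2 (unitv j) _ (fun B => s0 * rsum (fun k0 => q * (D * unitv j k0 - 2 * y j * y k0)
                                    * clmul (tocl y) (DH s (psi w) (unitv k0)) B))).
      rewrite lm_scal2 lm_sum2; congr (_ * _); rewrite /rsum; apply: eq_bigr => k0 _.
      by rewrite lm_scal2.
    move=> B; rewrite /clpartial /= rpartial_G //; congr (_ * _).
    rewrite (lm_ext2 y _ (fun B' => rsum (fun k0 => psi (unitv j) k0 * DH s (psi w) (unitv k0) B'))); last first.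
      move=> B'; exact: DH_lin.
    rewrite lm_sum2 /rsum; apply: eq_bigr => k0 _; rewrite lm_scal2 Hpsi dot_unit //.
  transitivity (s0 * rsum (fun k0 => - clmul (tocl y) (clmul (tocl (unitv k0)) (DH s (psi w) (unitv k0))) A)).
    rewrite /rsum -big_distrr /=; congr (_ * _).
    rewrite exchange_big /=; apply: eq_bigr => k0 _.
    rewrite -(stepK y q D (DH s (psi w) (unitv k0)) k0 A HqD HD) /rsum.
    apply: eq_bigr => j _; ring.
  rewrite (lm_ext2 y _ _ A EdH) lm_sum2 /rsum big_distrr /=.
  have E : forall a b : R, a * - b = - a * b by move=> *; ring.
  rewrite big_distrr /=; apply: eq_bigr => k0 _; exact: E.
apply: functional_extensionality => C.
rewrite /Pk EG /cladd /clscale.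
rewrite lm_scal2.
rewrite [in RHS]lm_add2 [in RHS]lm_scal2.
rewrite (lm_ext2 y (clmul (tocl (psi w)) (dirac (Hs s) (psi w)))
   (fun B => (q * D) * clmul (tocl w) (dirac (Hs s) (psi w)) B
       + (-2 * q * dot y w) * clmul (tocl y) (dirac (Hs s) (psi w)) B)); last first.
  move=> B; rewrite (lm_ext1 _ (fun i => (q * D) * w i + (-2 * q * dot y w) * y i)).
    by rewrite lm_lin1.
  move=> i; rewrite Hpsi; ring.
rewrite lm_lin2.
have H1 := Kid w y (dirac (Hs s) (psi w)) C.
have H2 := Kid y y (dirac (Hs s) (psi w)) C.
rewrite -HD in H2. rewrite dotC in H1.
have -> : clmul (tocl w) (clmul (tocl y) (dirac (Hs s) (psi w))) C =
  -2 * dot y w * dirac (Hs s) (psi w) C - clmul (tocl y) (clmul (tocl w) (dirac (Hs s) (psi w))) C by lra.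
have -> : clmul (tocl y) (clmul (tocl y) (dirac (Hs s) (psi w))) C = - D * dirac (Hs s) (psi w) C by lra.
have Dn0 : D <> 0 by move=> H0; rewrite H0 Rmult_0_r in HqD; lra.
have Hq : q = / D by rewrite -(Rmult_1_l (/ D)) -HqD; field.
set c := / INR (n + 2 * k - 2). clearbody c. rewrite Hq; field; exact: Dn0.
Qed.

End Cliff.

Lemma sumsq_ge0 n (F : 'I_n -> R) (P : pred 'I_n) : 0 <= \big[Rplus/0]_(i | P i) (F i * F i).
Proof.
apply: (big_ind (fun x => 0 <= x)); [lra | move=> a b Ha Hb; lra | move=> i _; nra].
Qed.

Lemma dot_pos n (y : vec n) : y <> @vzero n -> 0 < dot y y.
Proof.
move=> Hy.
have H0 : 0 <= dot y y by apply: sumsq_ge0.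
case: (Rle_lt_or_eq_dec _ _ H0) => // Heq.
exfalso; apply: Hy; apply: functional_extensionality => i.
have : y i * y i <= dot y y.
  rewrite /dot /rsum (bigD1 i) //=.
  match goal with |- _ <= _ + ?S => have : 0 <= S by apply: sumsq_ge0 end; lra.
rewrite -Heq /vzero => H; nra.
Qed.

Theorem lemma2 (n k : nat) (U : vec n -> Prop) (f : vec n -> vec n -> Cl n) :
  (1 <= k)%N ->
  domain U ->
  (forall x, U x -> harmonic_hom_poly k (f x)) ->
  forall (y w : vec n), y <> @vzero n -> U (vinv y) ->
    Pk k (fun w' : vec n =>
            clscale (/ (norm y ^ n))
              (clmul (tocl y)
                 (f (vinv y)
                    (grade1 (clscale (/ (norm y ^ 2))
                       (clmul (clmul (tocl y) (tocl w')) (tocl y))))))) w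
    = clscale (/ (norm y ^ n))
        (clmul (tocl y)
           (Pk k (f (vinv y))
              (grade1 (clscale (/ (norm y ^ 2))
                 (clmul (clmul (tocl y) (tocl w)) (tocl y)))))).
Proof.
move=> Hk HU Hf y w Hy HUy.
have [[s [_ Hrep]] _] := Hf _ HUy.
have Ef : f (vinv y) = Hs n s.
  apply: functional_extensionality => u; apply: functional_extensionality => A.
  by rewrite Hrep.
rewrite Ef.
have Dp := dot_pos n y Hy.
apply: (main n k s y w
   (fun w' => grade1 (clscale (/ (norm y ^ 2)) (clmul (clmul (tocl y) (tocl w')) (tocl y))))
   (/ (norm y ^ n)) (/ (norm y ^ 2)) (dot y y)).
- rewrite /norm pow2_sqrt; last lra.
  field; lra.
- by [].
- move=> v i; exact: phiE.
Qed.
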